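(* Let $a_m=\binom{2m-1}{m}$ for $m\ge1$. For $n\ge1$ let $A_n$ be the $(n+1)\times(n+1)$ matrix whose first row is $(1,4,4^2,\dots,4^n)$ and whose row $i+1$ (for $i=1,\dots,n$) is $(a_i,a_{i+1},\dots,a_{i+n})$, and let $A'_n$ be the $(n+1)\times(n+1)$ matrix whose first row is $(1,4,\dots,4^n)$ and whose row $i+1$ (for $i=1,\dots,n$) is $(a_{i+1},a_{i+2},\dots,a_{i+1+n})$. Then for all $n\ge1$: $\det A_n=(-1)^n$ and $\det A'_n=(-1)^n(n+1)$. *)

(* Defs.v *)
From mathcomp Require Import all_boot all_order all_algebra.
Set Implicit Arguments. Unset Strict Implicit. Unset Printing Implicit Defensive.
Import GRing.Theory Num.Theory.
Local Open Scope ring_scope.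

Definition a_seq (m : nat) : nat := 'C((2 * m).-1, m).

Definition A_mx (n : nat) : 'M[int]_(n.+1) :=
  \matrix_(i < n.+1, j < n.+1)
    (if i == 0 :> nat then (4 ^ j)%N%:Z else (a_seq (i + j))%:Z).

Definition A'_mx (n : nat) : 'M[int]_(n.+1) :=
  \matrix_(i < n.+1, j < n.+1)
    (if i == 0 :> nat then (4 ^ j)%N%:Z else (a_seq (i.+1 + j))%:Z).

(* Main.v *)
Require Import Defs.
From mathcomp Require Import all_boot all_order all_algebra.
From mathcomp Require Import zify ring lra.
Set Implicit Arguments. Unset Strict Implicit. Unset Printing Implicit Defensive.
Import GRing.Theory Num.Theory.
Local Open Scope ring_scope.

Fixpoint T (L k : nat) : int :=
  match L with
  | 0%N => (k == 0%N)%:R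
  | L'.+1 => (if k is k'.+1 then T L' k' else 0) + T L' k.+1
  end.

Lemma TS L k : T L.+1 k = (if k is k'.+1 then T L k' else 0) + T L k.+1.
Proof. by []. Qed.

Lemma T_gt L k : (L < k)%N -> T L k = 0.
Proof.
elim: L k => [|L IH] [|k] //= H.
by rewrite !IH ?addr0 //; lia.
Qed.

Lemma T_odd L k : odd (L + k) -> T L k = 0.
Proof.
elim: L k => [|L IH] [|k] //= H.
- by rewrite add0r IH // addn1 /=; rewrite addn0 in H.
- move: H; rewrite !addnS /= negbK => H.
  by rewrite !IH ?addr0 // !addnS /= negbK.
Qed.

Lemma T_closed L d k : L = (k + 2 * d)%N ->
  T L k = ('C(L, k + d))%:Z - ('C(L, (k + d).+1))%:Z.
Proof.
elim: L d k => [|L IH] d k HL.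
  have [-> ->] : k = 0%N /\ d = 0%N by lia.
  by rewrite /= !bin0 bin1 subr0.
case: k HL => [|k] HL.
  case: d HL => [|d] HL; first lia.
  rewrite TS (IH d 1%N); last lia.
  rewrite add0n !binS.
  have -> : 'C(L, d) = 'C(L, d.+1).
    have -> : d.+1 = (L - d)%N by lia.
    by rewrite bin_sub //; lia.
  rewrite add1n !PoszD; lia.
case: d HL => [|d] HL.
  rewrite TS (IH 0%N k); last lia.
  rewrite (T_gt (k:=k.+2)); last lia.
  have -> : L = k by lia.
  rewrite !addn0 !binS (@bin_small k k.+1) ?(@bin_small k k.+2) // binn; lia.
rewrite TS (IH d.+1 k); last lia.
rewrite (IH d k.+2); last lia.
have -> : (k.+2 + d = (k + d.+1).+1)%N by lia.
have -> : (k.+1 + d.+1 = (k + d.+1).+1)%N by lia.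
set m := (k + d.+1)%N.
rewrite !binS !PoszD; lia.
Qed.

Lemma T_diag L : T L L = 1.
Proof. by rewrite (T_closed (d:=0)) ?addn0 // binn bin_small. Qed.

Lemma gram_step p q M : (p < M)%N ->
  \sum_(0 <= k < M.+1) T p.+1 k * T q k = \sum_(0 <= k < M.+1) T p k * T q.+1 k.
Proof.
move=> pM.
rewrite big_nat_recl // [RHS]big_nat_recl //.
have E1 : \sum_(0 <= i < M) T p.+1 i.+1 * T q i.+1 =
   \sum_(0 <= i < M) T p i * T q i.+1 + \sum_(0 <= i < M) T p i.+2 * T q i.+1.
  by rewrite -big_split; apply: eq_bigr => i _; rewrite TS mulrDl.
have E2 : \sum_(0 <= i < M) T p i.+1 * T q.+1 i.+1 =
   \sum_(0 <= i < M) T p i.+1 * T q i + \sum_(0 <= i < M) T p i.+1 * T q i.+2.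
  by rewrite -big_split; apply: eq_bigr => i _; rewrite TS mulrDr.
rewrite E1 E2 /= !add0r.
have F1 : T p 1 * T q 0 + \sum_(0 <= i < M) T p i.+2 * T q i.+1 =
    \sum_(0 <= i < M) T p i.+1 * T q i.
  rewrite -(big_nat_recl _ _ (fun i => T p i.+1 * T q i)) //.
  by rewrite big_nat_recr //= (@T_gt p M.+1 (ltnW pM)) mul0r addr0.
have F2 : T p 0 * T q 1 + \sum_(0 <= i < M) T p i.+1 * T q i.+2 =
    \sum_(0 <= i < M) T p i * T q i.+1.
  rewrite -(big_nat_recl _ _ (fun i => T p i * T q i.+1)) //.
  by rewrite big_nat_recr //= (T_gt pM) mul0r addr0.
rewrite -F1 -F2; ring.
Qed.

Lemma gram p q N : (p < N)%N ->
  \sum_(0 <= k < N) T p k * T q k = T (p + q) 0.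
Proof.
elim: p q N => [|p IH] q [|N] //= H.
  rewrite big_nat_recl //= mul1r big1 ?addr0 // => i _.
  by rewrite mul0r.
by rewrite gram_step // IH ?addnS //; lia.
Qed.

Lemma sum2 (f : nat -> int) n :
  \sum_(0 <= k < 2 * n) f k = \sum_(0 <= l < n) (f (2 * l)%N + f (2 * l).+1).
Proof.
elim: n => [|n IH]; first by rewrite !big_geq.
have -> : (2 * n.+1 = (2 * n).+2)%N by lia.
by rewrite !big_nat_recr //= IH addrA.
Qed.

Lemma gram_odd p q n : odd p -> (p < 2 * n)%N ->
  \sum_(0 <= l < n) T p (2 * l).+1 * T q (2 * l).+1 = T (p + q) 0.
Proof.
move=> op pn; rewrite -(gram q pn) sum2; apply: eq_bigr => l _.
by rewrite (@T_odd p (2 * l)) ?mul0r ?add0r // oddD oddM /= op.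
Qed.

Lemma a_rel m : (0 < m)%N ->
  (a_seq m.+1)%:Z = 4 * (a_seq m)%:Z - T (2 * m) 0.
Proof.
case: m => [//|r] _.
rewrite (@T_closed _ r.+1 0) ?add0n //.
rewrite /a_seq.
have -> : (2 * r.+2).-1 = (2 * r + 2).+1 by lia.
have -> : (2 * r.+1).-1 = (2 * r).+1 by lia.
have -> : (2 * r.+1 = 2 * r + 2)%N by lia.
rewrite binS.
have -> : (2 * r + 2 = (2 * r).+2)%N by lia.
rewrite !binS.
have -> : 'C((2 * r).+1, r) = 'C((2 * r).+1, r.+1).
  have -> : r.+1 = ((2 * r).+1 - r)%N by lia.
  by rewrite bin_sub //; lia.
rewrite !PoszD; lia.
Qed.

Lemma T2 L k : T L.+2 k.+1 =
  (if k is k'.+1 then T L k' else 0) + 2 * T L k.+1 + T L k.+3.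
Proof. rewrite TS TS TS; case: k => [|k] /=; ring. Qed.

Definition mx {R : Type} N (f : nat -> nat -> R) : 'M[R]_N :=
  \matrix_(i < N, j < N) f i j.

Lemma mulmx_nat {R : pzRingType} N (f g : nat -> nat -> R) :
  mx N f *m mx N g = mx N (fun i j => \sum_(0 <= k < N) f i k * g k j).
Proof.
apply/matrixP => i j; rewrite !mxE big_mkord.
by apply: eq_bigr => k _; rewrite !mxE.
Qed.

Lemma det_low {R : comPzRingType} N (f : nat -> nat -> R) :
  (forall i j, (i < j < N)%N -> f i j = 0) ->
  \det (mx N f) = \prod_(0 <= i < N) f i i.
Proof.
move=> H; rewrite det_trig.
  by rewrite big_mkord; apply: eq_bigr => i _; rewrite mxE.
by apply/is_trig_mxP => i j ij; rewrite mxE H // ij ltn_ord.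
Qed.

Lemma det_up {R : comPzRingType} N (f : nat -> nat -> R) :
  (forall i j, (j < i < N)%N -> f i j = 0) ->
  \det (mx N f) = \prod_(0 <= i < N) f i i.
Proof.
move=> H; rewrite -det_tr.
have -> : (mx N f)^T = mx N (fun i j => f j i).
  by apply/matrixP => i j; rewrite !mxE.
by apply: det_low => i j ij; apply: H.
Qed.

Lemma sum_eq1 {R : pzRingType} N c (f : nat -> R) :
  \sum_(0 <= k < N) f k * (k == c)%:R = if (c < N)%N then f c else 0.
Proof.
elim: N => [|N IH]; first by rewrite big_geq.
rewrite big_nat_recr //= IH.
case: (ltngtP c N) => [cN|Nc|->].
- by rewrite mulr0 addr0 ltnS (ltnW cN).
- by rewrite mulr0 addr0 ltnS leqNgt Nc.
- by rewrite mulr1 add0r ltnSn.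
Qed.

Definition Uf (k j : nat) : int := (k == j)%:R - 4 * (k.+1 == j)%:R.
Definition Af (i j : nat) : int :=
  if i == 0%N then (4 ^ j)%N%:Z else (a_seq (i + j))%:Z.
Definition A'f (i j : nat) : int :=
  if i == 0%N then (4 ^ j)%N%:Z else (a_seq (i.+1 + j))%:Z.
Definition Xf (c : nat -> int) (i l : nat) : int :=
  if i == 0%N then (l == 0%N)%:R else if l == 0%N then c i
  else - T (2 * i).-1 (2 * l).-1.
Definition Yf (l j : nat) : int :=
  if l == 0%N then (j == 0%N)%:R else if j == 0%N then 0
  else T (2 * j).-1 (2 * l).-1.
Definition Xbf (i l : nat) : int :=
  if i == 0%N then (l == 0%N)%:R else if l == 0%N then (a_seq i.+1)%:Z
  else - T (2 * i).+1 (2 * l).-1.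

Lemma pm2 x : (2 * x.+1).-1 = (2 * x).+1.
Proof. lia. Qed.

Lemma XfS c i l : Xf c i.+1 l.+1 = - T (2 * i).+1 (2 * l).+1.
Proof. by rewrite /Xf !pm2. Qed.
Lemma YfS l j : Yf l.+1 j.+1 = T (2 * j).+1 (2 * l).+1.
Proof. by rewrite /Yf !pm2. Qed.
Lemma XbfS i l : Xbf i.+1 l.+1 = - T (2 * i.+1).+1 (2 * l).+1.
Proof. by rewrite /Xbf !pm2. Qed.

Lemma sumU N (r : nat -> int) j : (j < N)%N ->
  \sum_(0 <= k < N) r k * Uf k j = r j - (if j is j'.+1 then 4 * r j' else 0).
Proof.
move=> jN; rewrite /Uf.
under eq_bigr do rewrite mulrBr mulrCA.
rewrite sumrB -mulr_sumr sum_eq1 jN; congr (_ - _).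
case: j jN => [|j] jN.
  by rewrite big1 ?mulr0 // => k _; rewrite mulr0.
under eq_bigr do rewrite eqSS.
by rewrite sum_eq1 (ltnW jN).
Qed.

Lemma A_eq n : A_mx n = mx n.+1 Af.
Proof. by apply/matrixP => i j; rewrite !mxE. Qed.

Lemma A'_eq n : A'_mx n = mx n.+1 A'f.
Proof. by apply/matrixP => i j; rewrite !mxE. Qed.

Lemma AU n : mx n.+1 Af *m mx n.+1 Uf =
  mx n.+1 (Xf (fun i => (a_seq i)%:Z)) *m mx n.+1 Yf.
Proof.
rewrite !mulmx_nat; apply/matrixP => i j; rewrite !mxE sumU ?ltn_ord //.
move: (ltn_ord i) (ltn_ord j); move: (nat_of_ord i) (nat_of_ord j) => {i j} i j Hi Hj.
case: i Hi => [|i] Hi.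
  rewrite big_nat_recl // big1 ?addr0; last first.
    by move=> l _; rewrite /Xf /= mul0r.
  rewrite /Xf /Yf /Af !eqxx mul1r.
  case: j Hj => [|j] Hj; first by rewrite eqxx expn0.
  have -> : (j.+1 == 0%N) = false by [].
  by rewrite expnS PoszM subrr.
rewrite big_nat_recl //.
case: j Hj => [|j] Hj.
  rewrite big1 ?addr0; last by move=> l _; rewrite /Yf /= mulr0.
  by rewrite /Xf /Yf /Af !eqxx mulr1 addn0.
have -> : Yf 0 j.+1 = 0 by [].
rewrite mulr0 add0r.
under eq_bigr do rewrite XfS YfS mulNr.
rewrite sumrN gram_odd ?oddS ?oddM //; last by lia.
rewrite /Af.
have -> : (i.+1 == 0%N) = false by [].
have -> : ((2 * i).+1 + (2 * j).+1 = 2 * (i.+1 + j))%N by lia.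
have -> : (i.+1 + j.+1 = (i.+1 + j).+1)%N by lia.
rewrite a_rel //; ring.
Qed.

Lemma A'U n : mx n.+1 A'f *m mx n.+1 Uf = mx n.+1 Xbf *m mx n.+1 Yf.
Proof.
rewrite !mulmx_nat; apply/matrixP => i j; rewrite !mxE sumU ?ltn_ord //.
move: (ltn_ord i) (ltn_ord j); move: (nat_of_ord i) (nat_of_ord j) => {i j} i j Hi Hj.
case: i Hi => [|i] Hi.
  rewrite big_nat_recl // big1 ?addr0; last first.
    by move=> l _; rewrite /Xbf /= mul0r.
  rewrite /Xbf /Yf /A'f !eqxx mul1r.
  case: j Hj => [|j] Hj; first by rewrite eqxx expn0.
  have -> : (j.+1 == 0%N) = false by [].
  by rewrite expnS PoszM subrr.
rewrite big_nat_recl //.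
case: j Hj => [|j] Hj.
  rewrite big1 ?addr0; last by move=> l _; rewrite /Yf /= mulr0.
  by rewrite /Xbf /Yf /A'f !eqxx mulr1 addn0.
have -> : Yf 0 j.+1 = 0 by [].
rewrite mulr0 add0r.
under eq_bigr do rewrite XbfS YfS mulNr mulrC.
rewrite sumrN gram_odd ?oddS ?oddM //; last by lia.
rewrite /A'f.
have -> : (i.+1 == 0%N) = false by [].
have -> : ((2 * j).+1 + (2 * i.+1).+1 = 2 * (i.+2 + j))%N by lia.
have -> : (i.+2 + j.+1 = (i.+2 + j).+1)%N by lia.
rewrite a_rel //; ring.
Qed.

Definition Mf {R : pzRingType} (m l : nat) : R :=
  if m == 0%N then (l == 0%N)%:R else if l == 0%N then 0
  else 2 * (m == l)%:R + (m.+1 == l)%:R + (l.+1 == m)%:R.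

Lemma MfS {R : pzRingType} k c :
  Mf (R := R) k.+1 c.+1 = 2 * (k == c)%:R + (k.+1 == c)%:R + (c.+1 == k)%:R.
Proof. by []. Qed.

Lemma sum_tri {R : comPzRingType} N (g : nat -> R) c : (c < N)%N ->
  \sum_(0 <= k < N) g k * Mf k.+1 c.+1 =
  2 * g c + (if (c.+1 < N)%N then g c.+1 else 0) +
  (if c is c'.+1 then g c' else 0).
Proof.
move=> cN.
under eq_bigr do rewrite MfS !mulrDr mulrCA.
rewrite !big_split /= -mulr_sumr sum_eq1 cN [in RHS]addrAC.
congr (_ + _ + _).
  case: c cN => [|c] cN.
    by rewrite big1 // => k _; rewrite mulr0.
  under eq_bigr do rewrite eqSS.
  by rewrite sum_eq1 (ltnW cN).
under eq_bigr do rewrite eq_sym.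
by rewrite sum_eq1.
Qed.

Lemma XbM n : mx n.+1 Xbf =
  mx n.+1 (Xf (fun i => (a_seq i.+1)%:Z)) *m mx n.+1 Mf.
Proof.
rewrite mulmx_nat; apply/matrixP => i l; rewrite !mxE.
move: (ltn_ord i) (ltn_ord l); move: (nat_of_ord i) (nat_of_ord l) => {i l} i l Hi Hl.
rewrite big_nat_recl //.
case: i Hi => [|i] Hi.
  rewrite big1 ?addr0; last by move=> k _; rewrite /Xf /= mul0r.
  by rewrite /Xf /Xbf /Mf !eqxx mul1r.
case: l Hl => [|l] Hl.
  rewrite big1 ?addr0; last by move=> k _; rewrite /Mf /= mulr0.
  by rewrite /Xf /Xbf /Mf !eqxx mulr1.
have -> : Mf 0 l.+1 = 0 :> int by [].
rewrite mulr0 add0r.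
under eq_bigr do rewrite XfS.
rewrite sum_tri ?ltnS // XbfS.
have -> : (2 * i.+1).+1 = ((2 * i).+1).+2 by lia.
rewrite T2.
have E3 : (if (l.+1 < n)%N then - T (2 * i).+1 (2 * l.+1).+1 else 0) =
          - T (2 * i).+1 (2 * l).+3.
  case: ifP => H.
    by have -> : (2 * l.+1).+1 = (2 * l).+3 by lia.
  by rewrite T_gt ?oppr0 //; lia.
rewrite E3.
case: l Hl E3 => [|l] Hl _.
  rewrite muln0 /=; ring.
have -> : (2 * l.+1 = (2 * l).+2)%N by lia.
rewrite /=; ring.
Qed.

Definition Vf (k l : nat) : int :=
  if k == 0%N then (l == 0%N)%:R else if l == 0%N then 0
  else if (k <= l)%N then (-1) ^+ (k + l) * k%:R else 0.

Lemma sgn_dd x : (-1) ^+ (x + x) = 1 :> int.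
Proof. by rewrite addnn -mul2n exprM expr2 mulrNN mulr1 expr1n. Qed.

Lemma Mf_sym m l : Mf m l = Mf l m :> int.
Proof.
case: m l => [|m] [|l] //.
by rewrite !MfS [(m == _)]eq_sym addrAC.
Qed.

Lemma MVentry n m l : (m <= l < n.+1)%N ->
  \sum_(0 <= k < n.+1) Mf m k * Vf k l = if m == l then (l.+1)%:R else 0.
Proof.
move=> /andP [ml ln]; rewrite big_nat_recl //.
case: m ml => [|m] ml.
  rewrite big1 ?addr0; last by move=> k _; rewrite /Mf /= mul0r.
  by case: l ml ln => [|l] ml ln; rewrite /Mf /Vf !eqxx mul1r.
have -> : Mf m.+1 0 = 0 :> int by [].
rewrite mul0r add0r.
case: l ml ln => [//|l] ml ln.
under eq_bigr do rewrite Mf_sym mulrC.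
rewrite sum_tri; last by lia.
rewrite eqSS.
case: (ltngtP m l) => [lt|gt|<-].
- have -> : (m.+1 < n)%N by lia.
  rewrite /Vf /=.
  have -> : (m.+2 <= l.+1)%N by lia.
  have -> : (m.+1 <= l.+1)%N by lia.
  case: m lt ml => [|m] lt ml.
    rewrite !addSn !exprS; ring.
  have -> : (m.+1 <= l.+1)%N by lia.
  rewrite !addSn !exprS; ring.
- lia.
- have -> : Vf m.+2 m.+1 = 0.
    by rewrite /Vf /= ltnn.
  rewrite /Vf /= leqnn sgn_dd.
  case: m ml ln => [|m] ml ln.
    by rewrite mulr1 if_same addr0 /=.
  have -> : (m < m.+2)%N by lia.
  rewrite if_same addnS exprS sgn_dd.
  rewrite !mulrS; ring.
Qed.

Lemma prodS N : \prod_(0 <= i < N) ((i.+1)%:R : int) = (N`!)%:R.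
Proof.
elim: N => [|N IH]; first by rewrite big_geq.
by rewrite big_nat_recr //= IH factS natrM mulrC.
Qed.

Lemma detU n : \det (mx n.+1 Uf) = 1.
Proof.
rewrite det_up; last first.
  move=> i j /andP [ji _]; rewrite /Uf (gtn_eqF ji).
  by rewrite (@gtn_eqF j i.+1) ?mulr0 ?subr0 //; lia.
rewrite big1 // => i _; rewrite /Uf eqxx.
by rewrite (@gtn_eqF i i.+1) // mulr0 subr0.
Qed.

Lemma detY n : \det (mx n.+1 Yf) = 1.
Proof.
rewrite det_up; last first.
  move=> i j /andP [ji _]; rewrite /Yf.
  case: i ji => [//|i] ji; case: j ji => [//|j] ji.
  by rewrite T_gt //; lia.
rewrite big1 // => i _; rewrite /Yf.
by case: i => [//|i]; rewrite T_diag.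
Qed.

Lemma detX n c : \det (mx n.+1 (Xf c)) = (-1) ^+ n.
Proof.
rewrite det_low; last first.
  move=> i j /andP [ij _]; rewrite /Xf.
  case: i ij => [|i] ij; first by case: j ij.
  case: j ij => [//|j] ij.
  by rewrite T_gt ?oppr0 //; lia.
rewrite big_nat_recl // /Xf eqxx mul1r.
rewrite (eq_big_nat _ _ (F2 := fun _ => -1)); last first.
  by move=> i _; rewrite T_diag.
by rewrite prodr_const_nat subn0.
Qed.

Lemma detM n : \det (mx n.+1 (Mf (R := int))) = (n.+1)%:R.
Proof.
have h := det_mulmx (mx n.+1 (Mf (R := int))) (mx n.+1 Vf).
rewrite mulmx_nat det_low in h; last first.
  move=> i j /andP [ij jN]; rewrite MVentry ?(ltn_eqF ij) //.
  by rewrite (ltnW ij) jN.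
rewrite (eq_big_nat _ _ (F2 := fun i => (i.+1)%:R)) in h; last first.
  by move=> i /andP [_ iN]; rewrite MVentry ?eqxx // leqnn.
rewrite prodS (@det_up _ n.+1 Vf) in h; last first.
  move=> i j /andP [ji _]; rewrite /Vf.
  case: i ji => [//|i] ji; case: j ji => [//|j] ji.
  by rewrite leqNgt ji.
rewrite big_nat_recl // in h.
rewrite (eq_big_nat _ _ (F2 := fun i => (i.+1)%:R)) in h; last first.
  by move=> i _; rewrite /Vf /= leqnn sgn_dd mul1r.
rewrite prodS /Vf /= mul1r factS natrM in h.
apply: (@mulIf _ (n`!)%:R); first by rewrite pnatr_eq0 -lt0n fact_gt0.
by rewrite -h.
Qed.

Theorem lemma8p1 (n : nat) : (1 <= n)%N ->
  \det (A_mx n) = (-1) ^+ n /\ \det (A'_mx n) = (-1) ^+ n * (n.+1)%:R.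
Proof.
move=> _; split.
  have h := det_mulmx (mx n.+1 Af) (mx n.+1 Uf).
  by rewrite AU det_mulmx detU detY detX !mulr1 in h; rewrite A_eq h.
have h := det_mulmx (mx n.+1 A'f) (mx n.+1 Uf).
rewrite A'U det_mulmx detU detY XbM det_mulmx detX detM !mulr1 in h.
by rewrite A'_eq h.
Qed.
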